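(* If $\mathbb{M}$ is an implicitization matrix of $\phi$ and $\phi$ is not birational, then $\det(\mathbb{M})=c\,F^\delta$ with $c\in\mathbb{K}\setminus\{0\}$ and $\delta>1$.
   Context: $\mathbb{K}$ is a field of characteristic zero. $\phi:\mathbb{P}^2\dashrightarrow\mathbb{P}^3$, $\mathbf{t}=(t_1:t_2:t_3)\mapsto (p_1(\mathbf{t}):\dots:p_4(\mathbf{t}))$, with $p_i\in\mathbb{K}[t_1,t_2,t_3]$ homogeneous of the same degree, $\phi$ generically finite, so the closure of its image is an irreducible surface $S\subset\mathbb{P}^3$. $F\in\mathbb{K}[X_1,\dots,X_4]$ is the implicit equation of $S$ (irreducible homogeneous of minimal degree with $F(p_1,\dots,p_4)\equiv0$). $\phi$ is birational iff $[\mathbb{K}(\mathbb{P}^2):\mathbb{K}(S)]=1$, where $\mathbb{K}(S)\hookrightarrow\mathbb{K}(\mathbb{P}^2)$ via $f\mapsto f\circ\phi$. A moving surface of bi-degree $(m;n)$ ($m,n\ge1$) is a polynomial bihomogeneous of degree $m$ in $\mathbf{t}$ and $n$ in $\underline{X}=(X_1,\dots,X_4)$; it follows $\phi$ if it vanishes identically after substituting $X_i=p_i(\mathbf{t})$. An implicitization matrix of $\phi$ is a square $d\times d$ matrix $\mathbb{M}$ with entries in $\mathbb{K}[\underline{X}]$ such that: (1) there exist $m\ge1$ and distinct monomials $\mathbf{t}^{\alpha_1},\dots,\mathbf{t}^{\alpha_d}$ of degree $m$ (indexing the rows) with ${}^t\mathbb{M}(\mathbf{t}^{\alpha_1},\dots,\mathbf{t}^{\alpha_d})^t=(P(\mathbf{t};\underline{X}),M_1,\dots,M_{d-1})^t$,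 where each $M_i$ is a moving surface of bi-degree $(m;d_i)$ following $\phi$ and $P$ is a bihomogeneous polynomial of positive degree in $\underline{X}$, and there exist $\mathbf{t}^{\beta_1},\mathbf{t}^{\beta_2},\mathbf{t}^{\beta_3}$ among the $\mathbf{t}^{\alpha_i}$ with $t_1\mathbf{t}^{\beta_3}=t_3\mathbf{t}^{\beta_1}$ and $t_2\mathbf{t}^{\beta_3}=t_3\mathbf{t}^{\beta_2}$; (2) $\det(\mathbb{M})=c\,F^\delta$ with $\delta\ge1$ an integer and $c\in\mathbb{K}\setminus\{0\}$; (3) if $\phi$ is birational then $\delta=1$. *)

(* Defs.v *)
From HB Require Import structures.
From mathcomp Require Import all_boot all_order all_algebra.
From mathcomp Require Import mpoly.

Set Implicit Arguments.
Unset Strict Implicit.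
Unset Printing Implicit Defensive.

Import Order.TTheory GRing.Theory.
Local Open Scope ring_scope.

(* Conventions.
   - t = (t1,t2,t3) are the variables of {mpoly K[3]} (indices 0,1,2);
     X = (X1,..,X4) are the variables of {mpoly K[4]} (indices 0..3).
   - The parametrization phi is given by the 4-tuple p of polynomials in t.
   - Polynomials in (t ; X) are represented as {mpoly {mpoly K[4]}[3]}:
     polynomials in t with coefficients in K[X]. *)

Section Implicitization.
Variable K : fieldType.

Notation Kt := {mpoly K[3]}.
Notation KX := {mpoly K[4]}.
Notation KtX := {mpoly {mpoly K[4]}[3]}.

Definition t1 : Kt := 'X_(inord 0).
Definition t2 : Kt := 'X_(inord 1).
Definition t3 : Kt := 'X_(inord 2).

Definition substX (p : 4.-tuple Kt) (G : KX) : Kt := G \mPo p.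

(* B(t ; p_1(t),...,p_4(t)) for B in K[t;X] *)
Definition substTX (p : 4.-tuple Kt) (B : KtX) : Kt :=
  mmap (fun c : KX => substX p c) (fun i : 'I_3 => 'X_i) B.

Definition same_degree_homog (p : 4.-tuple Kt) : Prop :=
  exists dp : nat, forall i : 'I_4, tnth p i \is dp.-homog.

(* phi is generically finite: K(t1,t2,t3) is algebraic (hence finite) over
   K(p1,...,p4): each t_j is a root of a nonzero polynomial with
   coefficients in K[p1,...,p4]. *)
Definition generically_finite (p : 4.-tuple Kt) : Prop :=
  forall j : 'I_3, exists Q : {poly KX},
    map_poly (substX p) Q != 0 /\ (map_poly (substX p) Q).['X_j] = 0.

(* irreducibility in K[X] (units of K[X] are the nonzero constants) *)
Definition mirreducible (F : KX) : Prop :=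
  (1 < msize F)%N /\
  forall G H : KX, F = G * H -> (msize G <= 1)%N \/ (msize H <= 1)%N.

Definition implicit_equation (p : 4.-tuple Kt) (F : KX) : Prop :=
  mirreducible F /\
  exists dF : nat, F \is dF.-homog /\ substX p F = 0 /\
    forall (G : KX) (e : nat), G != 0 -> G \is e.-homog -> substX p G = 0 ->
      (dF <= e)%N.

(* phi is birational: [K(P^2) : K(S)] = 1, i.e. the embedding
   K(S) -> K(P^2), G/H |-> G(p)/H(p), is onto: every rational function a/b
   on P^2 (a, b homogeneous of the same degree, b <> 0) is of the form
   G(p)/H(p) with G, H homogeneous of the same degree and H not vanishing
   on S (H(p) <> 0). *)
Definition birational (p : 4.-tuple Kt) : Prop :=
  forall (a b : Kt) (e : nat), a \is e.-homog -> b \is e.-homog -> b != 0 ->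
    exists (G H : KX) (e' : nat),
      [/\ G \is e'.-homog, H \is e'.-homog, substX p H != 0 &
          a * substX p H = b * substX p G].

Definition bihomog (m e : nat) (B : KtX) : Prop :=
  B \is m.-homog /\ forall mon : 'X_{1..3}, B@_mon \is e.-homog.

Definition moving_surface_following (p : 4.-tuple Kt) (m e : nat) (B : KtX)
  : Prop :=
  [/\ (1 <= m)%N, (1 <= e)%N, bihomog m e B & substTX p B = 0].

(* the j-th entry of  ^t M (t^alpha_1, ..., t^alpha_d)^t *)
Definition col_poly (d : nat) (M : 'M[KX]_d) (alpha : 'I_d -> 'X_{1..3})
  (j : 'I_d) : KtX :=
  \sum_(i < d) (M i j)%:MP * 'X_[alpha i].

(* implicitization matrix of phi (square of size d = n.+1, since it has at
   least the column giving P) *)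
Definition implicitization_matrix (p : 4.-tuple Kt) (F : KX) (n : nat)
  (M : 'M[KX]_n.+1) : Prop :=
  (exists (m : nat) (alpha : 'I_n.+1 -> 'X_{1..3}) (eP : nat)
          (dd : 'I_n.+1 -> nat),
     [/\ (1 <= m)%N /\ injective alpha, (forall i, mdeg (alpha i) = m),
         ((1 <= eP)%N /\ bihomog m eP (col_poly M alpha ord0)),
         (forall j : 'I_n.+1, j != ord0 ->
           moving_surface_following p m (dd j) (col_poly M alpha j)) &
         (exists k1 k2 k3 : 'I_n.+1,
           t1 * 'X_[alpha k3] = t3 * 'X_[alpha k1] /\
           t2 * 'X_[alpha k3] = t3 * 'X_[alpha k2])]) /\
  (exists (c : K) (delta : nat),
     [/\ c != 0, (1 <= delta)%N, \det M = c%:MP * F ^+ delta &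
         (birational p -> delta = 1%N)]).

End Implicitization.

(* Main.v *)
Require Import Defs.
From HB Require Import structures.
From mathcomp Require Import all_boot all_order all_algebra.
From mathcomp Require Import mpoly.
From mathcomp Require Import fingroup perm zify.
Import GRing.Theory.
Local Open Scope ring_scope.

Section H.
Variable K : fieldType.

Lemma sign_homog k (R : ringType) n e (x : {mpoly R[n]}) :
  x \is e.-homog -> (-1) ^+ k * x \is e.-homog.
Proof.
by move=> hx; rewrite -signr_odd; case: (odd k); rewrite ?expr1 ?expr0 ?mulN1r ?mul1r ?rpredN.
Qed.

Lemma homog_det (R : comRingType) nv m (A : 'M[{mpoly R[nv]}]_m) (d : 'I_m -> nat) :
  (forall i j, A i j \is (d j).-homog) -> \det A \is (\sum_j d j).-homog.
Proof.
move=> hA; rewrite /determinant; apply: rpred_sum => s _.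
apply: sign_homog.
have -> : (\sum_j d j = \sum_i d (s i))%N by rewrite (reindex_inj (@perm_inj _ s)).
elim/big_rec2: _ => [|i y1 y2 _ hy]; first exact: dhomog1.
exact: dhomogM.
Qed.

Lemma key_cramer (S : comRingType) d (N : 'M[S]_d.+1) (v : 'I_d.+1 -> S) :
  (forall j, j != ord0 -> \sum_i N i j * v i = 0) ->
  forall k i, cofactor N k ord0 * v i = v k * cofactor N i ord0.
Proof.
move=> hN k i.
pose Q := \matrix_(a, b) if b == ord0 then (a == k)%:R else N a b.
have cofQ a : cofactor Q a ord0 = cofactor N a ord0.
  rewrite /cofactor; congr (_ * \det _); apply/matrixP => x y.
  by rewrite !mxE eq_sym (negbTE (neq_lift _ _)).
have detQ : \det Q = cofactor N k ord0.
  rewrite (expand_det_col Q ord0) (bigD1 k) //= big1 ?addr0.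
    by rewrite mxE eqxx eqxx mul1r cofQ.
  by move=> a /negbTE ne; rewrite mxE eqxx ne mul0r.
pose vr : 'rV[S]_d.+1 := \row_a v a.
have vQ b : (vr *m Q) ord0 b = if b == ord0 then v k else 0.
  rewrite mxE.
  have -> : \sum_j vr ord0 j * Q j b = \sum_j v j * (if b == ord0 then (j == k)%:R else N j b).
    by apply: eq_bigr => a _; rewrite /vr /Q !mxE.
  case: eqP => [_|/eqP nb].
    rewrite (bigD1 k) //= eqxx mulr1 big1 ?addr0 // => a /negbTE ->.
    by rewrite mulr0.
  by rewrite -[RHS](hN b nb); apply: eq_bigr => a _; rewrite mulrC.
have := congr1 (fun A : 'rV[S]_d.+1 => A ord0 i) (mulmxA vr Q (\adj Q)).
rewrite mul_mx_adj mul_mx_scalar /= !mxE detQ => ->.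
rewrite (bigD1 ord0) //= big1 ?addr0.
  by rewrite vQ eqxx mxE cofQ.
by move=> b /negbTE nb; rewrite vQ nb mul0r.
Qed.


Lemma comp_homog n k (R : comRingType) (a : {mpoly R[n]}) (lq : n.-tuple {mpoly R[k]}) e D :
  a \is e.-homog -> (forall i, tnth lq i \is D.-homog) -> a \mPo lq \is (D * e).-homog.
Proof.
move=> ha hq; rewrite comp_mpolyE big_seq; apply: rpred_sum => m hm; apply: dhomogZ.
have <- : (\sum_(i < n) D * m i)%N = (D * e)%N.
  by rewrite -big_distrr /= -mdegE (dhomog_mf ha hm).
elim/big_rec2: _ => [|i y1 y2 _ hy]; first exact: dhomog1.
by apply: dhomogM => //; apply: dhomogMn.
Qed.

Lemma homog_ident n (R : comRingType) (a : {mpoly R[n]}) e (g : 'I_n -> {mpoly R[n]})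
  (i2 : 'I_n) (z : {mpoly R[n]}) :
  a \is e.-homog -> (forall i, 'X_i * g i2 = z * g i) ->
  z ^+ e * (a \mPo [tuple g i | i < n]) = a * g i2 ^+ e.
Proof.
move=> ha hg; rewrite [in RHS](mpolyE a) comp_mpolyE mulr_sumr mulr_suml !big_seq.
apply: eq_bigr => m hm; rewrite -!mul_mpolyC mulrCA -mulrA; congr (_ * _).
have he : mdeg m = e := dhomog_mf ha hm.
rewrite -he mdegE -!prodrXr -big_split /= mpolyXE_id -big_split /=.
apply: eq_bigr => i _; rewrite tnth_mktuple -!exprMn; congr (_ ^+ _).
by rewrite hg.
Qed.

Lemma Xnz n (R : idomainType) (m : 'X_{1..n}) : ('X_[m] : {mpoly R[n]}) != 0.
Proof.
apply/eqP => h; have := @mcoeffX n R m m; rewrite h mcoeff0 eqxx /= => /eqP.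
by rewrite eq_sym oner_eq0.
Qed.

Lemma coef_col (d : nat) (M : 'M[{mpoly K[4]}]_d) alpha :
  injective alpha -> forall i j, (col_poly M alpha j)@_(alpha i) = M i j.
Proof.
move=> ainj i j; rewrite /col_poly raddf_sum (bigD1 i) //= big1 ?addr0.
  by rewrite mcoeffCM mcoeffX eqxx mulr1.
by move=> i' ne; rewrite mcoeffCM mcoeffX inj_eq // (negbTE ne) mulr0.
Qed.

Lemma substTX_col (p : 4.-tuple {mpoly K[3]}) d (M : 'M[{mpoly K[4]}]_d) alpha j :
  substTX p (col_poly M alpha j) = \sum_i substX p (M i j) * 'X_[alpha i].
Proof.
rewrite /substTX /col_poly /substX.
rewrite (_ : (fun c : {mpoly K[4]} => c \mPo p) = comp_mpoly p) //.
have E : forall c (m : 'X_{1..3}), mmap (comp_mpoly p) (fun i => 'X_i) (c *: 'X_[m]) = comp_mpoly p c * 'X_[m].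
  by move=> c m; rewrite mmapZ mmapX mmap1_id.
rewrite raddf_sum; apply: eq_bigr => i _.
rewrite mul_mpolyC; exact: E.
Qed.

Lemma subst_comp (p : 4.-tuple {mpoly K[3]}) (a : {mpoly K[3]}) (lq : 3.-tuple {mpoly K[4]}) :
  substX p (a \mPo lq) = a \mPo [tuple substX p (tnth lq i) | i < 3].
Proof.
rewrite /substX (comp_mpolyE a lq) (comp_mpolyE a) raddf_sum; apply: eq_bigr => m _.
apply: (etrans (comp_mpolyZ _ _ _)); rewrite rmorph_prod; congr (_ *: _); apply: eq_bigr => i _.
by rewrite rmorphXn tnth_mktuple.
Qed.

End H.

Theorem corollary4p3 (K : fieldType) (charK0 : [pchar K] =i pred0)
  (p : 4.-tuple {mpoly K[3]}) (F : {mpoly K[4]})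
  (hp : same_degree_homog p) (hfin : generically_finite p)
  (hF : implicit_equation p F)
  (n : nat) (M : 'M[{mpoly K[4]}]_n.+1) :
  implicitization_matrix p F M -> ~ birational p ->
  exists (c : K) (delta : nat),
    [/\ c != 0, (1 < delta)%N & \det M = c%:MP * F ^+ delta].
Proof.
move=> [[mm [alpha [eP [dd [[m1 ainj] adeg [eP1 [Phom Pcoef]] Hms
  [k1 [k2 [k3 [Ht1 Ht2]]]]]]]]] [c [delta [c0 d1 detE bir]]]] nbir.
exists c, delta; split => //.
case: delta d1 detE bir => [//|[|delta]] // _ detE _; exfalso; apply: nbir.
rewrite expr1 in detE.
case: hF => [[Fsz _] [dF [Fh [Fp Fmin]]]].
have Fnz : F != 0 by apply/eqP => F0; rewrite F0 msize0 in Fsz.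
pose d j := if j == ord0 then eP else dd j.
have hM : forall i j, M i j \is (d j).-homog.
  move=> i j; rewrite -(@coef_col K _ M alpha ainj i j) /d; case: eqP => [->|/eqP nj].
    exact: Pcoef.
  by case: (Hms j nj) => _ _ [_ h] _; exact: h.
pose C i := cofactor M i ord0.
pose D' := (\sum_(j < n) d (lift ord0 j))%N.
have hC : forall i, C i \is D'.-homog.
  move=> i; rewrite /C /cofactor; apply: sign_homog; apply: homog_det => a b.
  by rewrite !mxE.
have hdet : \det M \is (eP + D').-homog.
  have := @homog_det _ _ _ M d hM; rewrite big_ord_recl.
  by have -> : d ord0 = eP by rewrite /d eqxx.
have detnz : \det M != 0 by rewrite detE mulf_neq0 // mpolyC_eq0.
have hdF : (eP + D')%N = dF.
  apply: (dhomog_uniq detnz hdet); rewrite detE mul_mpolyC; exact: dhomogZ.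
have [k Ck] : exists k, C k != 0.
  case: (pickP (fun k => C k != 0)) => [k hk|h0]; first by exists k.
  move: detnz; rewrite (expand_det_col M ord0) big1 ?eqxx // => i _.
  by have := h0 i; rewrite /= => /negbFE /eqP; rewrite /C => ->; rewrite mulr0.
pose u i := substX p (C i).
have uk : u k != 0.
  apply/negP => /eqP h; have := Fmin _ _ Ck (hC k) h; lia.
pose N := map_mx (comp_mpoly p) M.
have hv : forall j, j != ord0 -> \sum_i N i j * 'X_[alpha i] = 0.
  move=> j nj; case: (Hms j nj) => _ _ _ h0; rewrite -[RHS]h0 substTX_col.
  by apply: eq_bigr => i _; rewrite mxE.
have rel' : forall k' i, u k' * 'X_[alpha i] = 'X_[alpha k'] * u i.
  move=> k' i; have := @key_cramer _ _ N _ hv k' i.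
  by rewrite !cofactor_map_mx.
have u3 : u k3 != 0.
  apply/eqP => h; have := rel' k k3; rewrite h mulr0 => /eqP.
  by rewrite mulf_eq0 (negbTE uk) (negbTE (Xnz _ _ _)).
have R1 : (t1 K) * u k3 = (t3 K) * u k1.
  apply: (mulfI (Xnz _ _ (alpha k))).
  by rewrite [LHS]mulrCA -(rel' k k3) [LHS]mulrCA Ht1 [LHS]mulrCA (rel' k k1) [LHS]mulrCA.
have R2 : (t2 K) * u k3 = (t3 K) * u k2.
  apply: (mulfI (Xnz _ _ (alpha k))).
  by rewrite [LHS]mulrCA -(rel' k k3) [LHS]mulrCA Ht2 [LHS]mulrCA (rel' k k2) [LHS]mulrCA.
pose kk := [tuple k1; k2; k3].
pose g i := u (tnth kk i).
pose i2 : 'I_3 := inord 2.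
have g2 : g i2 = u k3 by rewrite /g (tnth_nth k1) /= inordK.
have hg : forall i, 'X_i * g i2 = (t3 K) * g i.
  move=> i; rewrite g2 /g (tnth_nth k1); clearbody u.
  case: i => [[|[|[|?]]] Hi] //=.
  - have -> : Ordinal Hi = inord 0 by apply: val_inj; rewrite /= inordK.
    exact: R1.
  - have -> : Ordinal Hi = inord 1 by apply: val_inj; rewrite /= inordK.
    exact: R2.
  - have -> : Ordinal Hi = inord 2 by apply: val_inj; rewrite /= inordK.
    by [].
have t3nz : t3 K != 0 :> {mpoly K[3]}.
  exact: (Xnz _ _ U_(inord 2)).
move=> a b e ha hb bnz.
pose lqX : 3.-tuple {mpoly K[4]} := [tuple C (tnth kk i) | i < 3].
have hlq : forall i, tnth lqX i \is D'.-homog by move=> i; rewrite tnth_mktuple; exact: hC.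
have etup : [tuple substX p (tnth lqX i) | i < 3] = [tuple g i | i < 3].
  apply: eq_from_tnth => i; rewrite !tnth_mktuple /g /u; reflexivity.
have sc x : substX p (x \mPo lqX) = x \mPo [tuple g i | i < 3].
  by rewrite subst_comp etup.
have ida := @homog_ident _ _ a e g i2 (t3 K) ha hg.
have idb := @homog_ident _ _ b e g i2 (t3 K) hb hg.
exists (a \mPo lqX), (b \mPo lqX), (D' * e)%N; split.
- exact: comp_homog.
- exact: comp_homog.
- rewrite sc; apply/eqP => h; move: idb; rewrite h mulr0 => /eqP.
  by rewrite eq_sym mulf_eq0 (negbTE bnz) expf_eq0 g2 (negbTE u3) andbF.
- apply: (mulfI (expf_neq0 e t3nz)); rewrite !sc.
  by rewrite [LHS]mulrCA idb [RHS]mulrCA ida mulrCA.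
Qed.
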